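(* Let $n\ge 3$ be an integer and $r=\lceil \binom{n}{3}/\lfloor n/3\rfloor\rceil$. If $g\ge r$ is a positive integer and there exists an orthogonal array $\mathrm{OA}(3,n+2,g)$, then there exists a $\mathrm{TOC}_q(n,4,3)$ with $q=g+1$.
   Context: $\mathcal{H}_q(n,w)$ is the set of all words of length $n$ over $\mathbb{Z}_q$ with exactly $w$ nonzero entries, with the Hamming distance. An $(n,d,w)_q$-code is a nonempty subset of $\mathcal{H}_q(n,w)$ in which any two distinct words have Hamming distance at least $d$; $A_q(n,d,w)$ is the maximum size of such a code and a code of this size is optimal. A $\mathrm{TOC}_q(n,d,w)$ is a partition of $\mathcal{H}_q(n,w)$ into mutually disjoint optimal $(n,d,w)_q$-codes. An orthogonal array $\mathrm{OA}(t,k,s)$ is an $s^t\times k$ array over an $s$-symbol alphabet such that in every choice of $t$ columns each ordered $t$-tuple of symbols appears in exactly one row. *)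

(* Defs.v *)
From mathcomp Require Import all_boot.
Set Implicit Arguments. Unset Strict Implicit. Unset Printing Implicit Defensive.

(* Words of length n over Z_q, represented as functions 'I_n -> 'I_q,
   the symbol 0 of Z_q being the ordinal with value 0. *)
Definition word (q n : nat) := {ffun 'I_n -> 'I_q}.

Definition hweight (q n : nat) (x : word q n) : nat :=
  #|[set i : 'I_n | nat_of_ord (x i) != 0]|.
Definition hdist (q n : nat) (x y : word q n) : nat :=
  #|[set i : 'I_n | x i != y i]|.

Definition Hspace (q n w : nat) : {set word q n} :=
  [set x : word q n | hweight x == w].

Definition is_code (q n d w : nat) (C : {set word q n}) : bool :=
  [&& C != set0, C \subset Hspace q n w &
      [forall x in C, forall y in C, (x != y) ==> (d <= hdist x y)]].

Definition Aq (q n d w : nat) : nat :=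
  \max_(C : {set word q n} | is_code d w C) #|C|.

Definition is_optimal_code (q n d w : nat) (C : {set word q n}) : bool :=
  is_code d w C && (#|C| == Aq q n d w).

Definition is_TOC (q n d w : nat) (P : {set {set word q n}}) : bool :=
  partition P (Hspace q n w) && [forall C in P, is_optimal_code d w C].

(* A choice of t columns is given as an injective map 'I_t -> 'I_k
   (covering all orders, which is equivalent). *)
Definition is_OA (t k s : nat) (A : {ffun 'I_(s ^ t) -> {ffun 'I_k -> 'I_s}}) : Prop :=
  forall (c : {ffun 'I_t -> 'I_k}), injective c ->
  forall (v : {ffun 'I_t -> 'I_s}),
    #|[set r : 'I_(s ^ t) | [forall j : 'I_t, A r (c j) == v j]]| = 1.

Definition exists_OA (t k s : nat) : Prop :=
  exists A : {ffun 'I_(s ^ t) -> {ffun 'I_k -> 'I_s}}, @is_OA t k s A.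

Definition ceil_div (a b : nat) : nat := (a + b - 1) %/ b.

(* Main.v *)
Require Import Defs.
From mathcomp Require Import all_boot.
From mathcomp Require Import zify.
Set Implicit Arguments. Unset Strict Implicit. Unset Printing Implicit Defensive.
Definition supp q n (x : word q n) : {set 'I_n} := [set i | nat_of_ord (x i) != 0].
Definition sig q n (x : word q n) : nat := \sum_(p in supp x) nat_of_ord p.
Definition wid n (p : 'I_n) : 'I_(n + 2) := widen_ord (leq_addr 2 n) p.
Definition good g n (A : {ffun 'I_(g ^ 3) -> {ffun 'I_(n + 2) -> 'I_g}})
  (k : 'I_(g ^ 3)) (x : word g.+1 n) : bool :=
  [forall p in supp x, (A k (wid p) + sig x) %% g == (x p).-1].
Definition blk g n (A : {ffun 'I_(g ^ 3) -> {ffun 'I_(n + 2) -> 'I_g}})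
  (k : 'I_(g ^ 3)) : {set word g.+1 n} :=
  [set x in Hspace g.+1 n 3 | good A k x].

Lemma inH q n w (x : word q n) : (x \in Hspace q n w) = (#|supp x| == w).
Proof. by rewrite inE. Qed.

Definition pos n (T : {set 'I_n}) (hT : #|T| = 3) (j : 'I_3) : 'I_n :=
  enum_val (cast_ord (esym hT) j).
Definition cols n (T : {set 'I_n}) (hT : #|T| = 3) : {ffun 'I_3 -> 'I_(n + 2)} :=
  [ffun j => wid (pos hT j)].

Lemma cols_inj n (T : {set 'I_n}) (hT : #|T| = 3) : injective (cols hT).
Proof.
move=> i j; rewrite !ffunE => /(congr1 val) /= e.
apply: (cast_ord_inj (eq_n := esym hT)); apply: enum_val_inj; exact: val_inj.
Qed.

Lemma pos_in n (T : {set 'I_n}) (hT : #|T| = 3) j : pos hT j \in T.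
Proof. exact: enum_valP. Qed.

Lemma pos_onto n (T : {set 'I_n}) (hT : #|T| = 3) p : p \in T -> exists j, pos hT j = p.
Proof.
move=> pT; exists (cast_ord hT (enum_rank_in pT p)).
by rewrite /pos cast_ordK enum_rankK_in.
Qed.

Lemma diff_sub q n (x y : word q n) :
  [set i | x i != y i] \subset supp x :|: supp y.
Proof.
apply/subsetP => i; rewrite !inE; apply: contraR; rewrite negb_or !negbK.
by case/andP => /eqP a /eqP b; apply/eqP/val_inj => /=; rewrite a b.
Qed.

Lemma code_bound q n (C : {set word q n}) : is_code 4 3 C -> #|C| <= 'C(n, 3).
Proof.
case/and3P => _ sub /forallP hd.
rewrite -(card_in_imset (f := @supp q n)).
  have := card_draws 'I_n 3; rewrite card_ord => <-.
  apply: subset_leq_card; apply/subsetP => _ /imsetP[x xC ->].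
  move/subsetP: sub => /(_ x xC); by rewrite !inE.
move=> x y xC yC e; apply/eqP; apply/negPn/negP => nxy.
have := hd x; rewrite xC /= => /forallP /(_ y); rewrite yC nxy /= => h.
have : hdist x y <= 3.
  apply: leq_trans (subset_leq_card (diff_sub x y)) _.
  rewrite e setUid. move/subsetP: sub => /(_ y yC). by rewrite inH => /eqP ->.
by rewrite leqNgt (leq_trans _ h).
Qed.

Lemma good_uniq g n (A : {ffun 'I_(g ^ 3) -> {ffun 'I_(n + 2) -> 'I_g}}) :
  is_OA A -> forall k k' (x : word g.+1 n), #|supp x| = 3 ->
  good A k x -> good A k' x -> k = k'.
Proof.
move=> hA k k' x hT /forallP gk /forallP gk'.
have := hA _ (@cols_inj n _ hT) [ffun j => A k (cols hT j)].
move/eqP/cards1P => [r hr].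
have mem : forall k0, (forall p, p \in supp x -> A k0 (wid p) = A k (wid p)) -> k0 = r.
  move=> k0 h; apply/set1P; rewrite -hr inE; apply/forallP => j; rewrite !ffunE.
  by rewrite h // pos_in.
rewrite (mem k) // (mem k') // => p pT.
have := gk p; have := gk' p; rewrite pT /= => /eqP e1 /eqP e2.
apply: val_inj.
have : (A k' (wid p) + sig x == A k (wid p) + sig x %[mod g]) by rewrite e1 e2.
by rewrite eqn_modDr !modn_small // => /eqP.
Qed.

Lemma good_ex g n (A : {ffun 'I_(g ^ 3) -> {ffun 'I_(n + 2) -> 'I_g}}) :
  is_OA A -> 0 < g -> forall x : word g.+1 n, x \in Hspace g.+1 n 3 ->
  exists k, good A k x.
Proof.
move=> hA g0 x; rewrite inH => /eqP hT.
pose s := sig x.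
pose v : {ffun 'I_3 -> 'I_g} :=
  [ffun j => Ordinal (ltn_pmod ((x (pos hT j)).-1 + (g - s %% g)) g0)].
have := hA _ (@cols_inj n _ hT) v.
move/eqP/cards1P => [r hr]. exists r.
have : r \in [set r0 | [forall j, A r0 (cols hT j) == v j]] by rewrite hr set11.
rewrite inE => /forallP hrj.
apply/forallP => p; apply/implyP => pT.
have [j <-] := pos_onto hT pT.
have := hrj j; rewrite !ffunE => /eqP -> /=.
rewrite modnDml -/s.
have hx : (x (pos hT j)).-1 < g by have := ltn_ord (x (pos hT j)); lia.
move: hx (divn_eq s g) (ltn_pmod s g0).
set a := (x (pos hT j)).-1; set q' := s %/ g; set r' := s %% g.
move=> hx hs hr'.
have -> : a + (g - r') + s = q'.+1 * g + a by lia.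
by rewrite modnMDl modn_small.
Qed.

Lemma mk_ex g n (A : {ffun 'I_(g ^ 3) -> {ffun 'I_(n + 2) -> 'I_g}}) :
  0 < g -> forall k (T : {set 'I_n}), #|T| = 3 ->
  exists2 x, x \in blk A k & supp x = T.
Proof.
move=> g0 k T hT.
pose s := \sum_(p in T) nat_of_ord p.
pose x : word g.+1 n :=
  [ffun p => if p \in T then inord ((A k (wid p) + s) %% g).+1 else ord0].
have sx : supp x = T.
  apply/setP => p; rewrite !inE ffunE; case: ifP => pT //.
  by rewrite inordK // ltnS ltn_pmod.
exists x => //.
rewrite inE; apply/andP; split; first by rewrite inH sx hT.
apply/forallP => p; apply/implyP; rewrite sx => pT.
by rewrite /sig sx ffunE pT inordK //= ltnS ltn_pmod.
Qed.

Lemma symdiff_card (T : finType) (A B : {set T}) :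
  #|(A :\: B) :|: (B :\: A)| = #|A :\: B| + #|B :\: A|.
Proof.
rewrite cardsU (_ : (A :\: B) :&: (B :\: A) = set0) ?cards0 ?subn0 //.
by apply/setP => p; rewrite !inE; case: (p \in A); case: (p \in B).
Qed.

Lemma sum_neq n g (S T : {set 'I_n}) : n <= g -> #|S| = 3 -> #|T| = 3 ->
  #|S :&: T| = 2 ->
  (\sum_(p in S) nat_of_ord p) %% g != (\sum_(p in T) nat_of_ord p) %% g.
Proof.
move=> ng hS hT hI.
rewrite (big_setID T) (big_setID S (A := T)) /= [T :&: S]setIC eqn_modDl.
have : #|S :\: T| == 1 by rewrite cardsD hS hI.
case/cards1P => l el.
have : #|T :\: S| == 1 by rewrite cardsD hT setIC hI.
case/cards1P => l' el'.
rewrite el el' !big_set1 !modn_small; try exact: (leq_trans (ltn_ord _) ng).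
apply/negP => /eqP /val_inj e.
have : l \in S :\: T by rewrite el set11.
have : l' \in T :\: S by rewrite el' set11.
by rewrite -e !inE => /andP[nlS _] /andP[_ lS]; rewrite lS in nlS.
Qed.

Lemma blk_dist g n (A : {ffun 'I_(g ^ 3) -> {ffun 'I_(n + 2) -> 'I_g}}) :
  0 < g -> (4 <= n -> n <= g) -> forall k (x y : word g.+1 n),
  x \in blk A k -> y \in blk A k -> x != y -> 4 <= hdist x y.
Proof.
move=> g0 hg k x y /setIdP[hx /forallP gx] /setIdP[hy /forallP gy] nxy.
rewrite inH in hx; rewrite inH in hy.
have hS := eqP hx; have hT := eqP hy.
have vals : forall (z : word g.+1 n), (forall p, (p \in supp z) ==>
   ((A k (wid p) + sig z) %% g == (z p).-1)) ->
   forall p, p \in supp z -> nat_of_ord (z p) = ((A k (wid p) + sig z) %% g).+1.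
  move=> z gz p pz; have := gz p; rewrite pz /= => /eqP ->.
  by move: pz; rewrite inE; case: (nat_of_ord (z p)).
have zero : forall (z : word g.+1 n) p, p \notin supp z -> nat_of_ord (z p) = 0.
  by move=> z p; rewrite inE negbK => /eqP.
have neST : supp x != supp y.
  apply: contra nxy => /eqP eST; apply/eqP/ffunP => p; apply: val_inj => /=.
  have esig : sig x = sig y by rewrite /sig eST.
  case: (boolP (p \in supp x)) => pS.
    by rewrite (vals x gx p pS) (vals y gy p) ?esig // -eST.
  by rewrite !zero // -eST.
have sub1 : (supp x :\: supp y) :|: (supp y :\: supp x) \subset [set i | x i != y i].
  apply/subsetP => p; rewrite inE => /orP[]; rewrite inE => /andP[np pp];
    rewrite inE; apply/negP => /eqP e; move: np pp; rewrite !inE e; by move=> /negP h /h.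
have hI : #|supp x :&: supp y| <= 2.
  rewrite leqNgt; apply/negP => h3.
  have e1 : supp x :&: supp y == supp x by rewrite eqEcard subsetIl hS.
  have e2 : supp x :&: supp y == supp y by rewrite eqEcard subsetIr hT.
  by move: neST; rewrite -(eqP e1) -{2}(eqP e2) eqxx.
case: (ltnP #|supp x :&: supp y| 2) => hI2.
  apply: leq_trans (subset_leq_card sub1).
  rewrite symdiff_card !cardsD hS hT (setIC (supp y)); lia.
have hI' : #|supp x :&: supp y| = 2 by lia.
have hU : #|supp x :|: supp y| = 4 by rewrite cardsU hS hT hI'.
have n4 : 4 <= n by rewrite -hU; apply: leq_trans (max_card _) _; rewrite card_ord.
have dsig : sig x %% g != sig y %% g by apply: sum_neq => //; exact: hg.
rewrite /hdist -hU; apply: subset_leq_card; apply/subsetP => p pU.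
case: (boolP (p \in supp x :&: supp y)) => pI.
  move: pI; rewrite inE => /andP[px py]; rewrite inE.
  apply/negP => /eqP e; move/(congr1 val): e => /=.
  rewrite (vals x gx p px) (vals y gy p py) => -[] /eqP.
  by rewrite eqn_modDl (negPf dsig).
apply: (subsetP sub1); move: pU pI; rewrite !inE.
by case: (nat_of_ord (x p) != 0); case: (nat_of_ord (y p) != 0).
Qed.

Lemma arith n g : 4 <= n -> ceil_div 'C(n, 3) (n %/ 3) <= g -> n <= g.
Proof.
move=> n4 hg; apply: leq_trans hg; rewrite /ceil_div.
have m0 : 0 < n %/ 3 by rewrite divn_gt0 //; apply: leq_trans n4.
rewrite leq_divRL //.
have hC := bin_ffact n 3.
rewrite !ffactnS ffactn0 /= in hC.
have hm := divn_eq n 3. have hr := ltn_pmod n (isT : 0 < 3).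
move: hC hm hr m0.
set C := 'C(n, 3); set m := n %/ 3; set r := n %% 3.
move=> hC hm hr m0.
rewrite (_ : 3`! = 6) // in hC.
have e1 : n.-1 = n - 1 by lia. have e2 : (n - 1).-1 = n - 2 by lia.
rewrite e1 in hC. rewrite e2 muln1 in hC.
clearbody C m r. case: (leqP n 4) => n5.
  have n4e : n = 4 by lia. have m1 : m = 1 by lia. rewrite n4e in hC *. rewrite m1. lia.
have h1 : n * m * 3 <= n * n by rewrite -mulnA leq_mul2l; apply/orP; right; lia.
have h2 : 2 * n <= (n - 1) * (n - 2).
  have -> : n = (n - 5) + 5 by lia.
  set k := n - 5. have -> : k + 5 - 1 = k + 4 by lia. have -> : k + 5 - 2 = k + 3 by lia.
  rewrite !mulnDl !mulnDr. lia.
have h3 : n * (2 * n) <= n * ((n - 1) * (n - 2)) by rewrite leq_mul2l h2 orbT.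
move: h1 h3; rewrite -hC. rewrite mulnA. lia.
Qed.

Lemma blk_code g n (A : {ffun 'I_(g ^ 3) -> {ffun 'I_(n + 2) -> 'I_g}}) :
  0 < g -> 3 <= n -> (4 <= n -> n <= g) -> forall k, is_code 4 3 (blk A k).
Proof.
move=> g0 n3 hg k; apply/and3P; split.
- have : 0 < #|[set T : {set 'I_n} | #|T| == 3]| by rewrite card_draws card_ord bin_gt0.
  case/card_gt0P => T; rewrite inE => /eqP hT.
  have [x xB _] := mk_ex A g0 k hT.
  by apply/set0Pn; exists x.
- by apply/subsetP => x /setIdP[].
- apply/forallP => x; apply/implyP => xB; apply/forallP => y; apply/implyP => yB.
  apply/implyP => nxy; exact: blk_dist xB yB nxy.
Qed.

Lemma blk_card g n (A : {ffun 'I_(g ^ 3) -> {ffun 'I_(n + 2) -> 'I_g}}) :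
  0 < g -> 3 <= n -> (4 <= n -> n <= g) -> forall k, #|blk A k| = 'C(n, 3).
Proof.
move=> g0 n3 hg k; apply/eqP; rewrite eqn_leq; apply/andP; split.
  exact: code_bound (blk_code A g0 n3 hg k).
have := card_draws 'I_n 3; rewrite card_ord => <-.
apply: leq_trans (leq_imset_card (@supp g.+1 n) (blk A k)).
apply: subset_leq_card; apply/subsetP => T; rewrite inE => /eqP hT.
have [x xB sx] := mk_ex A g0 k hT.
by apply/imsetP; exists x.
Qed.

Lemma main_toc g n (A : {ffun 'I_(g ^ 3) -> {ffun 'I_(n + 2) -> 'I_g}}) :
  is_OA A -> 0 < g -> 3 <= n -> (4 <= n -> n <= g) ->
  is_TOC 4 3 [set blk A k | k : 'I_(g ^ 3)].
Proof.
move=> hA g0 n3 hg; apply/andP; split.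
  apply/and3P; split.
  - apply/eqP/setP => x; rewrite /cover; apply/bigcupP/idP.
      by case=> _ /imsetP[k _ ->] /setIdP[].
    move=> xH; have [k gk] := good_ex hA g0 xH.
    exists (blk A k); first by apply/imsetP; exists k.
    by apply/setIdP.
  - apply/trivIsetP => _ _ /imsetP[k1 _ ->] /imsetP[k2 _ ->] ne.
    rewrite -setI_eq0; apply/eqP/setP => x; rewrite in_set0; apply/negbTE.
    apply/negP; rewrite inE => /andP[] /setIdP[xH g1] /setIdP[_ g2].
    move: xH; rewrite inH => /eqP hT.
    by move: ne; rewrite (good_uniq hA hT g1 g2) eqxx.
  - apply/imsetP => -[k _ e].
    by have /and3P[ne _ _] := blk_code A g0 n3 hg k; rewrite -e eqxx in ne.
apply/forallP => B; apply/implyP => /imsetP[k _ ->].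
rewrite /is_optimal_code blk_code //=; apply/eqP/eqP; rewrite eqn_leq; apply/andP; split.
  exact: leq_bigmax_cond (blk_code A g0 n3 hg k).
rewrite blk_card //; apply/bigmax_leqP => C; exact: code_bound.
Qed.

Theorem proposition4p7 (n g : nat) :
  3 <= n ->
  0 < g ->
  ceil_div 'C(n, 3) (n %/ 3) <= g ->
  exists_OA 3 (n + 2) g ->
  exists P : {set {set word (g + 1) n}}, is_TOC 4 3 P.
Proof.
move=> n3 g0 hr [A hA]; rewrite addn1.
exists [set blk A k | k : 'I_(g ^ 3)].
apply: main_toc => // n4; exact: arith n4 hr.
Qed.
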